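(* Let $p$ be a prime, $d\ge1$, and $\boldsymbol n\in\mathbb{Z}^d$. Let $(a_k)_{k\in\mathbb{Z}}$ be elements of $\mathbb{Z}_p$ such that for all integers $l$ and $s\ge0$, $$\sum_{k:\ \lfloor k/p^s\rfloor=l}a_k\equiv0\pmod{p^s}.$$ Let $C:\mathbb{Z}^d\times\mathbb{Z}\to\mathbb{Z}_p$ be such that for all $k\in\mathbb{Z}$ and integers $r\ge1$, $$C(p^r\boldsymbol n;k)\equiv C(p^{r-1}\boldsymbol n;\lfloor k/p\rfloor)\pmod{p^r}.$$ Then for all integers $l$ and $r\ge0$, $$\sum_{k:\ \lfloor k/p^r\rfloor=l}a_k\,C(p^r\boldsymbol n;k)\equiv0\pmod{p^r}.$$
   Context: $\mathbb{Z}_p$ denotes the $p$-adic integers and $\lfloor x\rfloor$ the floor function; each sum over $\{k:\lfloor k/p^s\rfloor=l\}$ is a finite sum over the $p^s$ integers $k=lp^s,\dots,lp^s+p^s-1$. *)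

(* Defs.v *)
From HB Require Import structures.
From mathcomp Require Import all_boot all_order all_algebra.
Set Implicit Arguments. Unset Strict Implicit. Unset Printing Implicit Defensive.
Import Order.TTheory GRing.Theory Num.Theory.

(* The p-adic integers Z_p, realised as the inverse limit of the Z/p^n:
   a p-adic integer is a coherent sequence of residues x_n in [0, p^n)
   (stored as x_n = x_n %% p^n), with x_{n+1} = x_n mod p^n. *)
Record zp (p : nat) := Zp {
  zp_res : nat -> nat;
  zp_norm : forall n, zp_res n %% p ^ n = zp_res n;
  zp_coh : forall n, zp_res n.+1 %% p ^ n = zp_res n }.

Section ZpOps.
Variable p : nat.

Lemma zp0_norm n : 0 %% p ^ n = 0. Proof. by rewrite mod0n. Qed.
Lemma zp0_coh n : 0 %% p ^ n = 0. Proof. by rewrite mod0n. Qed.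
Definition zp0 : zp p := @Zp p (fun _ => 0) zp0_norm zp0_coh.

Lemma dvd_pexp n : p ^ n %| p ^ n.+1.
Proof. by rewrite expnS dvdn_mull. Qed.

Section Bin.
Variables x y : zp p.

Lemma zp_add_norm n :
  ((zp_res x n + zp_res y n) %% p ^ n) %% p ^ n = (zp_res x n + zp_res y n) %% p ^ n.
Proof. by rewrite modn_mod. Qed.
Lemma zp_add_coh n :
  ((zp_res x n.+1 + zp_res y n.+1) %% p ^ n.+1) %% p ^ n
  = (zp_res x n + zp_res y n) %% p ^ n.
Proof. by rewrite modn_dvdm ?dvd_pexp // -modnDm !zp_coh. Qed.
Definition zp_add : zp p :=
  @Zp p (fun n => (zp_res x n + zp_res y n) %% p ^ n) zp_add_norm zp_add_coh.

Lemma zp_mul_norm n :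
  ((zp_res x n * zp_res y n) %% p ^ n) %% p ^ n = (zp_res x n * zp_res y n) %% p ^ n.
Proof. by rewrite modn_mod. Qed.
Lemma zp_mul_coh n :
  ((zp_res x n.+1 * zp_res y n.+1) %% p ^ n.+1) %% p ^ n
  = (zp_res x n * zp_res y n) %% p ^ n.
Proof. by rewrite modn_dvdm ?dvd_pexp // -modnMm !zp_coh. Qed.
Definition zp_mul : zp p :=
  @Zp p (fun n => (zp_res x n * zp_res y n) %% p ^ n) zp_mul_norm zp_mul_coh.
End Bin.

Definition zp_sum (s : seq (zp p)) : zp p := foldr zp_add zp0 s.

(* x = y (mod p^s) in Z_p : x and y have the same image in Z_p / p^s Z_p = Z/p^s. *)
Definition zp_eqmod (s : nat) (x y : zp p) : Prop := zp_res x s = zp_res y s.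

(* The finite index set {k in Z : floor(k / p^s) = l}, i.e. the p^s integers
   k = l p^s, ..., l p^s + p^s - 1. *)
Definition block (s : nat) (l : int) : seq int :=
  [seq (l * (p ^ s)%:Z + i%:Z)%R | i <- iota 0 (p ^ s)].
End ZpOps.

(* Main.v *)
Require Import Defs.
From HB Require Import structures.
From mathcomp Require Import all_boot all_order all_algebra.
From mathcomp Require Import ring zify.
Import Order.TTheory GRing.Theory Num.Theory.

Lemma split_sum (f : nat -> nat) m p :
  \sum_(0 <= i < m * p) f i = \sum_(0 <= j < m) \sum_(0 <= t < p) f (j * p + t).
Proof.
elim: m => [|m IH]; first by rewrite mul0n !big_geq.
rewrite big_nat_recr //= -IH mulSn addnC (big_cat_nat _ (n:=m * p)) ?leq_addr //=.
congr (_ + _).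
rewrite -{1}(add0n (m * p)) big_addn addnC addnK.
by apply: eq_bigr => i _; rewrite addnC.
Qed.

Lemma idx_eq (l : int) (p r j t : nat) :
  ((l * (p ^ r)%:Z + j%:Z) * p%:Z + t%:Z = l * (p ^ r.+1)%:Z + (j * p + t)%:Z)%R.
Proof. rewrite expnSr !PoszD !PoszM; ring. Qed.

Lemma idx_div (M : int) (p t : nat) : (0 < p)%N -> (t < p)%N ->
  ((M * p%:Z + t%:Z) %/ p%:Z)%Z = M.
Proof.
move=> hp ht; rewrite divzMDl ?divz_small ?addr0 //.
by rewrite -lt0n.
Qed.

Lemma key (p : nat) (hp : (0 < p)%N) (c : nat -> int -> nat) r :
  (forall j k, (0 < j <= r)%N -> c j k = c j.-1 (k %/ p%:Z)%Z %[mod p ^ j]) ->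
  forall a : int -> nat,
  (forall l s, (s <= r)%N -> p ^ s %| \sum_(0 <= i < p ^ s) a (l * (p ^ s)%:Z + i%:Z)%R) ->
  forall l, p ^ r %| \sum_(0 <= i < p ^ r)
     a (l * (p ^ r)%:Z + i%:Z)%R * c r (l * (p ^ r)%:Z + i%:Z)%R.
Proof.
elim: r => [|r IH] hc a ha l; first by rewrite expn0 dvd1n.
set K := fun i : nat => (l * (p ^ r.+1)%:Z + i%:Z)%R.
have step1 : \sum_(0 <= i < p ^ r.+1) a (K i) * c r.+1 (K i) =
   \sum_(0 <= i < p ^ r.+1) a (K i) * c r (K i %/ p%:Z)%Z %[mod p ^ r.+1].
  rewrite -modn_summ -[in RHS]modn_summ; congr (_ %% _); apply: eq_bigr => i _.
  by rewrite -modnMmr -[in RHS]modnMmr hc ?leqnn.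
rewrite /dvdn step1 -/(dvdn _ _).
set b := fun M : int => (\sum_(0 <= t < p) a (M * p%:Z + t%:Z)%R) %/ p.
have hb : forall M : int, \sum_(0 <= t < p) a (M * p%:Z + t%:Z)%R = p * b M.
  move=> M; rewrite mulnC divnK //.
  by have := ha M 1%N isT; rewrite expn1.
rewrite expnSr split_sum.
have -> : \sum_(0 <= j < p ^ r) \sum_(0 <= t < p) a (K (j * p + t)) * c r (K (j * p + t) %/ p%:Z)%Z
   = p * \sum_(0 <= j < p ^ r) b (l * (p ^ r)%:Z + j%:Z)%R * c r (l * (p ^ r)%:Z + j%:Z)%R.
  rewrite big_distrr /=; apply: eq_bigr => j _.
  rewrite mulnA -hb big_distrl /=; apply: eq_big_nat => t /andP[_ ht].
  by rewrite /K -idx_eq idx_div.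
rewrite -expnSr expnS dvdn_pmul2l //; apply: IH.
  by move=> j k /andP[j0 jr]; apply: hc; rewrite j0 ltnW.
move=> l' s hs.
have := ha l' s.+1 hs.
rewrite expnSr split_sum.
have -> : \sum_(0 <= j < p ^ s) \sum_(0 <= t < p) a (l' * (p ^ s * p)%:Z + (j * p + t)%:Z)%R
   = p * \sum_(0 <= i < p ^ s) b (l' * (p ^ s)%:Z + i%:Z)%R.
  rewrite big_distrr /=; apply: eq_bigr => j _.
  by rewrite -hb; apply: eq_bigr => t _; rewrite idx_eq expnSr.
by rewrite mulnC dvdn_pmul2l.
Qed.

Lemma res_le (p : nat) (x : zp p) m n : (m <= n)%N ->
  zp_res x m = zp_res x n %% p ^ m.
Proof.
move=> /subnKC <-; elim: (n - m) => [|k IH]; first by rewrite addn0 zp_norm.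
rewrite IH addnS -(zp_coh x (m + k)) modn_dvdm //.
by apply: dvdn_exp2l; rewrite leq_addr.
Qed.

Lemma res_sum (p : nat) (s : seq (zp p)) n :
  zp_res (zp_sum s) n = (\sum_(x <- s) zp_res x n) %% p ^ n.
Proof.
elim: s => [|x s IH]; first by rewrite big_nil mod0n.
by rewrite big_cons /= IH modnDmr.
Qed.

Lemma iota_sum (F : nat -> nat) N :
  \sum_(i <- iota 0 N) F i = \sum_(0 <= i < N) F i.
Proof. by rewrite /index_iota subn0. Qed.

Theorem lemma5p6 (p d : nat) (hp : prime p) (hd : (0 < d)%N)
  (n : 'rV[int]_d) (a : int -> zp p) (C : 'rV[int]_d -> int -> zp p)
  (ha : forall (l : int) (s : nat),
      zp_eqmod s (zp_sum [seq a k | k <- block p s l]) (zp0 p))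
  (hC : forall (k : int) (r : nat), (1 <= r)%N ->
      zp_eqmod r (C (((p ^ r)%:Z) *: n)%R k)
                 (C (((p ^ r.-1)%:Z) *: n)%R (k %/ p%:Z)%Z)) :
  forall (l : int) (r : nat),
    zp_eqmod r (zp_sum [seq zp_mul (a k) (C (((p ^ r)%:Z) *: n)%R k) | k <- block p r l])
             (zp0 p).
Proof.
move=> l r; rewrite /zp_eqmod res_sum /block !big_map iota_sum /=.
rewrite modn_summ.
apply/eqP; rewrite -/(dvdn _ _).
apply: (@key p (prime_gt0 hp) (fun j k => zp_res (C (((p ^ j)%:Z) *: n)%R k) r) r
          _ (fun k => zp_res (a k) r)).
  move=> j k /andP[j0 jr].
  rewrite -!res_le //.
  by have := hC k j j0.
move=> l' s hs.
have := ha l' s; rewrite /zp_eqmod res_sum /block !big_map iota_sum /=.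
move=> h; apply/eqP; rewrite -modn_summ -[RHS]h.
congr (_ %% _); apply: eq_bigr => i _.
by rewrite -res_le.
Qed.
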